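(* Let $n\ge2$, $\omega\in\mathbb{R}^n$, $k\in\mathbb{R}_{>0}^n$ satisfy (IC1) $\sum_\mu\omega_\mu=0$, (IC2) $\omega\ne0$, (IC3) $\left|\frac{\omega_1}{k_1}\right|\le\cdots\le\left|\frac{\omega_n}{k_n}\right|$. Let $\sigma\in\{-1,+1\}^n$ and $f_\sigma(R)=-R+\frac1n\sum_{\mu=1}^n\sigma_\mu\sqrt{k_\mu^2R-\omega_\mu^2}$. If $s_\ell=\sum_{\mu=1}^\ell\sigma_\mu k_\mu\le0$ for all $\ell=1,\ldots,n$, then $f_\sigma$ has no positive roots.
   Context: Square roots are nonnegative real square roots; a positive root of $f_\sigma$ is a real $R>0$ with $k_\mu^2R-\omega_\mu^2\ge0$ for all $\mu$ and $f_\sigma(R)=0$. *)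

(* Defs.v *)
From mathcomp Require Import all_boot all_order all_algebra.
Set Implicit Arguments. Unset Strict Implicit. Unset Printing Implicit Defensive.
Import Order.TTheory GRing.Theory Num.Theory.
Local Open Scope ring_scope.

Definition f_sigma (R : rcfType) (n : nat) (omega k sigma : 'I_n -> R)
    (x : R) : R :=
  - x + n%:R^-1 * \sum_(mu < n) sigma mu * Num.sqrt (k mu ^+ 2 * x - omega mu ^+ 2).

Definition positive_root (R : rcfType) (n : nat) (omega k sigma : 'I_n -> R)
    (x : R) : Prop :=
  0 < x /\ (forall mu, 0 <= k mu ^+ 2 * x - omega mu ^+ 2) /\
  f_sigma omega k sigma x = 0.

(* Main.v *)
Require Import Defs.
From mathcomp Require Import all_boot all_order all_algebra.
From mathcomp Require Import ring lra.
Import Order.TTheory GRing.Theory Num.Theory.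
Local Open Scope ring_scope.

Lemma h2 (R : rcfType) (x w kk : R) : 0 < kk -> 0 <= kk ^+ 2 * x - w ^+ 2 -> 0 <= x - (w / kk) ^+ 2.
Proof.
move=> kp Hr.
have -> : x - (w / kk) ^+ 2 = (kk ^+ 2 * x - w ^+ 2) / kk ^+ 2.
  by field; rewrite gt_eqF.
by apply: divr_ge0 => //; rewrite sqr_ge0.
Qed.
Lemma h1 (R : rcfType) (x u v : R) : `|u| <= `|v| -> 0 <= x - u ^+ 2 ->
  Num.sqrt (x - v ^+ 2) <= Num.sqrt (x - u ^+ 2).
Proof.
move=> Huv H0; rewrite ler_sqrt //.
rewrite lerD2l lerN2 -(real_normK (num_real u)) -(real_normK (num_real v)).
by rewrite ler_sqr ?nnegrE ?normr_ge0.
Qed.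

Lemma abel_claim (R : realDomainType) (b a : nat -> R) (m : nat) :
  (forall i, (i.+1 < m)%N -> a i.+1 <= a i) ->
  (forall l, (1 <= l <= m)%N -> \sum_(i < l) b i <= 0) ->
  forall j, (j < m)%N ->
  \sum_(i < j.+1) b i * a i <= (\sum_(i < j.+1) b i) * a j.
Proof.
move=> Ha Hb; elim=> [|j IH] Hj.
  by rewrite !big_ord_recr !big_ord0 /= !add0r.
rewrite big_ord_recr /= [X in _ <= X * _]big_ord_recr /= mulrDl lerD2r.
apply: (le_trans (IH (ltnW Hj))).
have S0 := Hb j.+1 (ltnW Hj).
by have := ler_wnM2l S0 (Ha j Hj).
Qed.

Lemma abel (R : realDomainType) (b a : nat -> R) (m : nat) :
  (forall i, (i.+1 < m)%N -> a i.+1 <= a i) ->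
  (forall l, (1 <= l <= m)%N -> \sum_(i < l) b i <= 0) ->
  (forall i, 0 <= a i) ->
  \sum_(i < m) b i * a i <= 0.
Proof.
move=> Ha Hb Ha0; case: m Ha Hb => [|m] Ha Hb; first by rewrite big_ord0.
have H1 := @abel_claim R b a m.+1 Ha Hb m (ltnSn m).
have H2 := Hb m.+1 (leqnn _). have H3 := Ha0 m.
exact: le_trans H1 (mulr_le0_ge0 H2 H3).
Qed.

Theorem proposition2 (R : rcfType) (n : nat) (omega k sigma : 'I_n -> R) :
  (2 <= n)%N ->
  (forall mu, 0 < k mu) ->
  \sum_(mu < n) omega mu = 0 ->
  (exists mu, omega mu != 0) ->
  (forall mu nu : 'I_n, (mu <= nu)%N ->
      `|omega mu / k mu| <= `|omega nu / k nu|) ->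
  (forall mu, sigma mu = 1 \/ sigma mu = -1) ->
  (forall l : nat, (1 <= l <= n)%N ->
      \sum_(mu < n | (mu < l)%N) sigma mu * k mu <= 0) ->
  ~ (exists x : R, positive_root omega k sigma x).
Proof.
case: n omega k sigma => [|n] omega k sigma // _ Hk _ _ Hmon _ Hs [x [Hx [Hrad Hf]]].
pose b (i : nat) := sigma (inord i) * k (inord i).
pose a (i : nat) := Num.sqrt (x - (omega (inord i) / k (inord i)) ^+ 2).
have Hsum : \sum_(mu < n.+1) sigma mu *
     Num.sqrt (k mu ^+ 2 * x - omega mu ^+ 2) = \sum_(i < n.+1) b i * a i.
  apply: eq_bigr => i _; rewrite /b /a inord_val -mulrA; congr (_ * _).
  have kp := Hk i.
  have -> : k i ^+ 2 * x - omega i ^+ 2 = k i ^+ 2 * (x - (omega i / k i) ^+ 2).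
    by field; rewrite gt_eqF.
  by rewrite sqrtrM ?sqr_ge0 // sqrtr_sqr gtr0_norm.
have Hle : \sum_(i < n.+1) b i * a i <= 0.
  apply: abel.
  - move=> i Hi; rewrite /a.
    have E1 : inord i.+1 = Ordinal Hi :> 'I_n.+1 by apply/val_inj; rewrite /= inordK.
    have Hi' : (i < n.+1)%N by apply: ltnW.
    have E2 : inord i = Ordinal Hi' :> 'I_n.+1 by apply/val_inj; rewrite /= inordK.
    rewrite E1 E2; apply: h1; first by apply: Hmon => /=.
    by apply: h2; [exact: Hk | exact: Hrad].
  - move=> l /andP [l1 ln].
    rewrite (big_ord_widen _ _ ln).
    rewrite (eq_bigr (fun i : 'I_n.+1 => sigma i * k i)); first by apply: Hs; rewrite l1 ln.
    by move=> i _; rewrite /b inord_val.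
  - by move=> i; apply: sqrtr_ge0.
move: Hf; rewrite /f_sigma Hsum => Hf.
have : 0 <= (n.+1)%:R^-1 :> R by rewrite invr_ge0.
move=> Hc; have := mulr_ge0_le0 Hc Hle.
move: Hx Hf; set S := \sum_(i < n.+1) b i * a i; set c := (n.+1)%:R^-1.
lra.
Qed.
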